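(* Let $f\in I_V(\chi^{-c})$ satisfy $f(g\,\iota(h,h))=\chi(\kappa_V(\det h))f(g)$ for all $g\in G(V^\square)$ and $h\in G(V)$. Then $g\mapsto f(\iota(g,\mathrm{id}_V))$ is a class function on $G(V)$, and for every irreducible representation $\pi$ of $G(V)$ the operator $Z_{V,\chi^{-c},\pi}(f)=\sum_{g\in G(V)}f(\iota(g,\mathrm{id}))\pi(g)$ is a scalar operator.
   Context: Let $\mathbb F$ be a finite field of odd cardinality $q$, $\mathbb E/\mathbb F$ of degree $1$ or $2$ with Galois generator $x\mapsto\bar x$; $\mathcal C$ algebraically closed of characteristic not dividing $q$. $(V,\langle\cdot,\cdot\rangle_V)$ is an $\epsilon$-sesquilinear space over $\mathbb E$ (nondegenerate or identically zero form; $\epsilon_V=1$ if $\mathbb E\ne\mathbb F$) with isometry group $G(V)$. $V^\square=V^+\oplus V^-$ with form $\langle v_1,v_2\rangle-\langle w_1,w_2\rangle$ on $v_1^++w_1^-,v_2^++w_2^-$; $V^\Delta=\{v^++v^-\}$; $\iota(g_1,g_2)(v^++w^-)=(g_1v)^++(g_2w)^-$; $P_V$ the stabilizer of $V^\Delta$. For $\chi:\mathbb E^\times\to\mathcal C^\times$, $\chi^{-c}(x)=\chi(\bar x)^{-1}$, and for a character $\mu$, $I_V(\mu)$ is the space of $f:G(V^\square)\to\mathcal C$ with $f(pg)=\mu(\det(p|_{V^\Delta}))f(g)$ for $p\in P_V$ (nondegenerate case), resp. $f(pg)=\mu(\det(p|_{V^\Delta}))\mu^{-c}(\det(p|_{V^\square/V^\Delta}))f(g)$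 (zero-form case). $\kappa_V:\mathbb E^\times\to\mathbb E^\times$ is $\kappa_V(x)=x$ if the form is nondegenerate and $\kappa_V(x)=x/\bar x$ if it is zero. *)

(* Defs.v *)
From HB Require Import structures.
From mathcomp Require Import all_boot all_order all_algebra all_field.
Set Implicit Arguments. Unset Strict Implicit. Unset Printing Implicit Defensive.
Import GRing.Theory.
Local Open Scope ring_scope.

(* Conventions: E is a finite field with an involutive field automorphism s
   (x |-> xbar); F is its fixed field, of cardinality q.  V = E^n (column
   vectors); the form is <v,w> = v^T B (s w).  A matrix g acts by v |-> g v. *)

Section Defs.
Variables (E : finFieldType) (s : {rmorphism E -> E}).

Definition qF : nat := #|[set x : E | s x == x]|.

Definition sesq_space (n : nat) (eps : E) (B : 'M[E]_n) : Prop :=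
  [/\ eps = 1 \/ eps = -1,
      (exists x, s x != x) -> eps = 1,
      B^T = eps *: map_mx s B
    & B = 0 \/ B \in unitmx].

Definition isom_group (n : nat) (B : 'M[E]_n) : {set 'M[E]_n} :=
  [set g : 'M[E]_n | (g \in unitmx) && (g^T *m B *m map_mx s g == B)].

Definition sq_form (n : nat) (B : 'M[E]_n) : 'M[E]_(n + n) := block_mx B 0 0 (- B).

Definition iotaV (n : nat) (g1 g2 : 'M[E]_n) : 'M[E]_(n + n) := block_mx g1 0 0 g2.

(* columns span V^Delta = { v^+ + v^- } *)
Definition diag_emb (n : nat) : 'M[E]_(n + n, n) := col_mx 1%:M 1%:M.

(* P_V: stabilizer of V^Delta in G(V^square) *)
Definition P_V (n : nat) (B : 'M[E]_n) : {set 'M[E]_(n + n)} :=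
  [set p in isom_group (sq_form B) |
     (((diag_emb n)^T *m p^T) == (diag_emb n)^T)%MS].

(* det(p|_{V^Delta}) in the basis v |-> v^+ + v^- : p (v,v) = ((a+b)v,(a+b)v) *)
Definition det_restr (n : nat) (p : 'M[E]_(n + n)) : E :=
  \det (ulsubmx p + ursubmx p).

(* det(p | V^square / V^Delta), identifying the quotient with V via
   (x,y) |-> x - y; the induced map is a - c *)
Definition det_quot (n : nat) (p : 'M[E]_(n + n)) : E :=
  \det (ulsubmx p - dlsubmx p).

Variable C : fieldType.

Definition is_char (chi : E -> C) : Prop :=
  (forall x y, x != 0 -> y != 0 -> chi (x * y) = chi x * chi y) /\
  (forall x, x != 0 -> chi x != 0).

Definition cinv (chi : E -> C) : E -> C := fun x => (chi (s x))^-1.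

Definition in_IV (n : nat) (B : 'M[E]_n) (mu : E -> C) (f : 'M[E]_(n + n) -> C)
  : Prop :=
  forall p g, p \in P_V B -> g \in isom_group (sq_form B) ->
    f (p *m g) =
      (if B == 0 then mu (det_restr p) * cinv mu (det_quot p)
       else mu (det_restr p)) * f g.

Definition kappa (n : nat) (B : 'M[E]_n) (x : E) : E :=
  if B == 0 then x / s x else x.

(* representation of the finite group G (a set of invertible matrices closed
   under product) on C^d, in MathComp's convention for mx_representation *)
Definition is_rep (n : nat) (G : {set 'M[E]_n}) (d : nat)
  (rho : 'M[E]_n -> 'M[C]_d) : Prop :=
  rho 1%:M = 1%:M /\
  forall g h, g \in G -> h \in G -> rho (g *m h) = rho g *m rho h.

(* irreducibility, as MathComp's mx_irreducible (mxsimple rho 1%:M) unfolds *)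
Definition irred_rep (n : nat) (G : {set 'M[E]_n}) (d : nat)
  (rho : 'M[E]_n -> 'M[C]_d) : Prop :=
  (0 < d)%N /\
  forall U : 'M[C]_d, (forall g, g \in G -> (U *m rho g <= U)%MS) ->
    U = 0 \/ row_full U.

End Defs.

(* Main.v *)
Require Import Defs.
From HB Require Import structures.
From mathcomp Require Import all_boot all_order all_algebra all_field.
Import GRing.Theory.
Local Open Scope ring_scope.
Set Implicit Arguments. Unset Strict Implicit.

Section H.
Variables (E : finFieldType) (s : {rmorphism E -> E}).

Lemma isomM m (B : 'M[E]_m) g h : g \in isom_group s B -> h \in isom_group s B ->
  g *m h \in isom_group s B.
Proof.
rewrite !inE => /andP[ug /eqP eg] /andP[uh /eqP eh].
rewrite unitmx_mul ug uh /= trmx_mul map_mxM.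
rewrite mulmxA.
have -> : h^T *m g^T *m B *m map_mx s g = h^T *m (g^T *m B *m map_mx s g) by rewrite !mulmxA.
by rewrite eg eh.
Qed.

Lemma isomV m (B : 'M[E]_m) g : g \in isom_group s B -> invmx g \in isom_group s B.
Proof.
rewrite !inE => /andP[ug /eqP eg]; rewrite unitmx_inv ug /=.
apply/eqP; rewrite -{1}eg map_invmx.
rewrite !mulmxA -trmx_mul mulmxV // trmx1 mul1mx -mulmxA.
have us : map_mx s g \in unitmx.
  by rewrite unitmxE det_map_mx fmorph_unit -unitfE -unitmxE.
by rewrite (mulmxV us) mulmx1.
Qed.

Lemma isom1 m (B : 'M[E]_m) : 1%:M \in isom_group s B.
Proof. by rewrite inE unitmx1 trmx1 map_mx1 mul1mx mulmx1 eqxx. Qed.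

Lemma iota_isom n (B : 'M[E]_n) a b : a \in isom_group s B -> b \in isom_group s B ->
  iotaV a b \in isom_group s (sq_form B).
Proof.
rewrite !inE => /andP[ua /eqP ea] /andP[ub /eqP eb].
rewrite /iotaV /sq_form unitmxE det_ublock unitrM -!unitmxE ua ub /=.
rewrite tr_block_mx map_block_mx !trmx0 !map_mx0 !mulmx_block.
rewrite !(mul0mx, mulmx0, addr0, add0r).
rewrite ?mulNmx ?mulmxN ea. by rewrite (mulNmx (b^T *m B)) eb.
Qed.

Lemma iotaM n (a b c d : 'M[E]_n) : iotaV a b *m iotaV c d = iotaV (a *m c) (b *m d).
Proof.
by rewrite /iotaV mulmx_block !(mul0mx, mulmx0, addr0, add0r).
Qed.

Lemma iota_PV n (B : 'M[E]_n) x : x \in isom_group s B -> iotaV x x \in P_V s B.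
Proof.
move=> xG; rewrite inE iota_isom //=.
rewrite -trmx_mul /diag_emb /iotaV mul_block_col !(mul0mx, mulmx0, addr0, add0r, mulmx1).
have -> : col_mx x x = col_mx 1%:M 1%:M *m x by rewrite mul_col_mx mul1mx.
rewrite trmx_mul; apply/eqmxP; apply: eqmxMfull.
by rewrite row_full_unit unitmx_tr; move: xG; rewrite inE => /andP[].
Qed.
Lemma dummy : True. Proof. by [].
Qed.

Lemma det_restr_iota n (x : 'M[E]_n) : det_restr (iotaV x x) = \det x.
Proof. by rewrite /det_restr /iotaV block_mxKul block_mxKur addr0. Qed.
Lemma det_quot_iota n (x : 'M[E]_n) : det_quot (iotaV x x) = \det x.
Proof. by rewrite /det_quot /iotaV block_mxKul block_mxKdl subr0. Qed.
End H.
Lemma chi1 (E : finFieldType) (C : fieldType) (chi : E -> C) : is_char chi -> chi 1 = 1.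
Proof.
move=> [hm hnz]; have h := hm 1 1 (oner_neq0 _) (oner_neq0 _).
rewrite mulr1 in h.
have nz := hnz 1 (oner_neq0 _).
by apply: (mulfI nz); rewrite mulr1 -h.
Qed.

Lemma class_fun (E : finFieldType) (C : closedFieldType)
  (s : {rmorphism E -> E}) (n : nat) (B : 'M[E]_n) (eps : E)
  (chi : E -> C) (f : 'M[E]_(n + n) -> C) :
  (forall x, s (s x) = x) ->
  sesq_space s eps B ->
  is_char chi ->
  in_IV s B (cinv s chi) f ->
  (forall g h, g \in isom_group s (sq_form B) -> h \in isom_group s B ->
     f (g *m iotaV h h) = chi (kappa s B (\det h)) * f g) ->
  forall g x, g \in isom_group s B -> x \in isom_group s B ->
     f (iotaV (x *m g *m invmx x) 1%:M) = f (iotaV g 1%:M).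
Proof.
move=> ss [_ _ _ hB] hchi hIV hinv g x gG xG.
have xiG := isomV xG.
have ux : x \in unitmx by move: xG; rewrite inE => /andP[].
have e : iotaV (x *m g *m invmx x) 1%:M =
   iotaV x x *m (iotaV g 1%:M *m iotaV (invmx x) (invmx x)).
  by rewrite !iotaM mul1mx mulmxV // mulmxA.
have g1G := iota_isom gG (isom1 s B).
rewrite e (hIV _ _ (iota_PV xG)); last exact: isomM g1G (iota_isom xiG xiG).
rewrite hinv // mulrA -[RHS]mul1r; congr (_ * _).
rewrite det_restr_iota det_quot_iota det_inv /kappa /cinv.
have dnz : \det x != 0 by rewrite -unitfE -unitmxE.
have sdnz : s (\det x) != 0 by rewrite fmorph_eq0.
have [hm hnz] := hchi.
have c1 := chi1 hchi.
case: eqP => [B0|Bn0].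
- rewrite ss invrK fmorphV invrK.
  rewrite (hm _ _ (invr_neq0 dnz) sdnz).
  have bc : chi (\det x) * chi (\det x)^-1 = 1 by rewrite -hm ?invr_neq0 // mulfV.
  by rewrite -mulrA (mulrA (chi _)) bc mul1r mulVf ?hnz.
- have uB : B \in unitmx by case: hB.
  have dB : \det B != 0 by rewrite -unitfE -unitmxE.
  have : \det x * s (\det x) = 1.
    move: xG; rewrite inE => /andP[_ /eqP /(congr1 determinant)].
    rewrite !det_mulmx det_tr det_map_mx mulrAC => h.
    by apply: (mulIf dB); rewrite mul1r.
  move=> hd; have -> : (\det x)^-1 = s (\det x).
    by rewrite -[s _]mul1r -(mulVf dnz) -mulrA hd mulr1.
  by rewrite mulVf ?hnz.
Qed.
Unset Implicit Arguments.
Theorem mainTheorem4 (E : finFieldType) (C : closedFieldType)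
  (s : {rmorphism E -> E}) (n : nat) (B : 'M[E]_n) (eps : E)
  (chi : E -> C) (f : 'M[E]_(n + n) -> C) :
  (forall x, s (s x) = x) ->
  odd (qF s) ->
  (qF s)%:R != 0 :> C ->
  sesq_space s eps B ->
  is_char chi ->
  in_IV s B (cinv s chi) f ->
  (forall g h, g \in isom_group s (sq_form B) -> h \in isom_group s B ->
     f (g *m iotaV h h) = chi (kappa s B (\det h)) * f g) ->
  (forall g x, g \in isom_group s B -> x \in isom_group s B ->
     f (iotaV (x *m g *m invmx x) 1%:M) = f (iotaV g 1%:M)) /\
  (forall (d : nat) (rho : 'M[E]_n -> 'M[C]_d),
     is_rep (isom_group s B) rho -> irred_rep (isom_group s B) rho ->
     exists c : C,
       \sum_(g in isom_group s B) f (iotaV g 1%:M) *: rho g = c%:M).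
Proof.
move=> ss _ _ hsq hchi hIV hinv.
have cf := class_fun ss hsq hchi hIV hinv.
split; first exact: cf.
move=> d rho [rho1 rhoM] [dpos irr].
set G := isom_group s B.
set Z := \sum_(g in G) f (iotaV g 1%:M) *: rho g.
have comm : forall x, x \in G -> rho x *m Z = Z *m rho x.
  move=> x xG.
  have ux : x \in unitmx by move: xG; rewrite inE => /andP[].
  have xiG := isomV xG.
  rewrite /Z mulmx_sumr mulmx_suml.
  rewrite (reindex (fun h => invmx x *m h *m x)) /=; last first.
    exists (fun h => x *m h *m invmx x) => h _.
      by rewrite !mulmxA mulmxV // mul1mx -mulmxA mulmxV // mulmx1.
    by rewrite !mulmxA mulVmx // mul1mx -mulmxA mulVmx // mulmx1.
  apply: eq_big => [j | j jG].
    apply/idP/idP => h; last by apply: isomM => //; apply: isomM.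
    have -> : j = x *m (invmx x *m j *m x) *m invmx x.
      by rewrite !mulmxA mulmxV // mul1mx -mulmxA mulmxV // mulmx1.
    by apply: isomM => //; apply: isomM.
  have jG' : j \in G.
    have -> : j = x *m (invmx x *m j *m x) *m invmx x.
      by rewrite !mulmxA mulmxV // mul1mx -mulmxA mulmxV // mulmx1.
    by apply: isomM => //; apply: isomM.
  have := cf j (invmx x) jG' xiG; rewrite invmxK => ->.
  rewrite -scalemxAr -scalemxAl; congr (_ *: _).
  rewrite -rhoM //.
  by rewrite !mulmxA mulmxV // mul1mx rhoM.
have [c hc] : exists c, root (char_poly Z) c.
  by apply/closed_rootP; rewrite size_char_poly; case: d dpos {rho rho1 rhoM irr Z comm}.
exists c.
have ev : eigenvalue Z c by rewrite eigenvalue_root_char.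
have inv : forall g, g \in G -> (eigenspace Z c *m rho g <= eigenspace Z c)%MS.
  move=> g gG; rewrite /eigenspace sub_kermx -mulmxA.
  have -> : rho g *m (Z - c%:M) = (Z - c%:M) *m rho g.
    by rewrite mulmxBl mulmxBr comm // scalar_mxC.
  by rewrite mulmxA mulmx_ker mul0mx.
case: (irr _ inv) => [U0 | full].
  by move: ev; rewrite /eigenvalue U0 eqxx.
have : (1%:M <= eigenspace Z c)%MS by rewrite sub1mx.
by rewrite /eigenspace sub_kermx mul1mx subr_eq0 => /eqP.
Qed.
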